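(* For every $h\in G$ and $n\in\mathbb Z$, the ideal $\{h^n\}^{\#\#}\lhd\kappa G^\#$ is contained in the ideal of $\kappa G^\#$ generated by $P_n(\bar h)$.
   Context: Let $\kappa$ be a field of characteristic $0$ and $G$ a group. Let $*:\kappa G\to\kappa G$ be the $\kappa$-linear map with $g^*=g^{-1}$, $(\kappa G)^*$ its fixed points, and $A_G$ the quotient of $\kappa G$ by the two-sided ideal generated by all $ab-ba$, $a\in\kappa G$, $b\in(\kappa G)^*$; $*$ descends to $A_G$, and $\kappa G^\#=\{x\in A_G:x^*=x\}$. Group elements are identified with their images in $A_G$, and $\bar x=\tfrac12(x+x^* )$. For $L\subset G$, $L^{\#\#}$ is the ideal of $\kappa G^\#$ generated by $\{\overline{xl}-\overline{xl^{-1}}:x\in A_G,l\in L\}$. The polynomials $P_n\in\kappa[X]$ are defined by $P_0=0$, $P_1=1$, $2XP_n=P_{n-1}+P_{n+1}$ for all $n\in\mathbb Z$. *)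

(* Defs.v *)
From HB Require Import structures.
From mathcomp Require Import all_boot all_order all_algebra.
Set Implicit Arguments. Unset Strict Implicit. Unset Printing Implicit Defensive.
Import Order.TTheory GRing.Theory Num.Theory.
Local Open Scope ring_scope.

Section GroupAlgebra.
Variables (K : fieldType) (G : groupType).

(** Elements of kG are represented by formal finite sums  sum_i c_i g_i,
    i.e. lists of (coefficient, group element) pairs. *)
Definition kG := seq (K * G).

Definition kcoef (x : kG) (g : G) : K := \sum_(p <- x | p.2 == g) p.1.

(** equality in kG: all coefficients agree *)
Definition keqv (x y : kG) : Prop := forall g, kcoef x g = kcoef y g.

Definition kadd (x y : kG) : kG := x ++ y.
Definition kopp (x : kG) : kG := [seq (- p.1, p.2) | p <- x].
Definition ksub (x y : kG) : kG := kadd x (kopp y).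
Definition kscale (c : K) (x : kG) : kG := [seq (c * p.1, p.2) | p <- x].
Definition kmul (x y : kG) : kG :=
  [seq (p.1 * q.1, (p.2 * q.2)%g) | p <- x, q <- y].
Definition kone : kG := [:: (1, 1%g)].
Definition kgrp (g : G) : kG := [:: (1, g)].
Definition kstar (x : kG) : kG := [seq (p.1, (p.2)^-1%g) | p <- x].
Definition kbar (x : kG) : kG := kscale 2^-1 (kadd x (kstar x)).

Definition ksym (b : kG) : Prop := keqv (kstar b) b.

(** The two-sided ideal I of kG generated by all ab - ba, a in kG, b in (kG)^*:
    the smallest subset containing 0 and all u (ab - ba) v, closed under sums
    and under equality in kG.  (Closure under scalars is automatic.) *)
Inductive inI : kG -> Prop :=
| inI_gen u v a b : ksym b -> inI (kmul (kmul u (ksub (kmul a b) (kmul b a))) v)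
| inI_nil : inI [::]
| inI_add x y : inI x -> inI y -> inI (kadd x y)
| inI_eqv x y : keqv x y -> inI x -> inI y.

(** A_G = kG / I; equality in A_G of (the images of) x and y *)
Definition eqA (x y : kG) : Prop := inI (ksub x y).

(** (the image in A_G of) x lies in kG^# = { x in A_G | x^* = x } *)
Definition sharp (x : kG) : Prop := eqA (kstar x) x.

(** The ideal of kG^# generated by a subset S of kG^# (given by representatives). *)
Inductive sharp_ideal (S : kG -> Prop) : kG -> Prop :=
| si_gen a s b : sharp a -> S s -> sharp b -> sharp_ideal S (kmul (kmul a s) b)
| si_nil : sharp_ideal S [::]
| si_add x y : sharp_ideal S x -> sharp_ideal S y -> sharp_ideal S (kadd x y)
| si_eqA x y : eqA x y -> sharp_ideal S x -> sharp_ideal S y.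

Definition sharpsharp (L : G -> Prop) : kG -> Prop :=
  sharp_ideal (fun y => exists x l, L l /\
     y = ksub (kbar (kmul x (kgrp l))) (kbar (kmul x (kgrp (l^-1)%g)))).

Definition kpeval (p : {poly K}) (x : kG) : kG :=
  foldr (fun c acc => kadd (kmul acc x) (kscale c kone)) [::] p.

End GroupAlgebra.

Definition gexpz (G : groupType) (h : G) (n : int) : G :=
  match n with
  | Posz k => (h ^+ k)%g
  | Negz k => ((h ^+ k.+1)^-1)%g
  end.

(** The polynomials P_n, n in Z:  P_0 = 0, P_1 = 1, 2 X P_n = P_(n-1) + P_(n+1). *)
Fixpoint Ppair (K : fieldType) (n : nat) : {poly K} * {poly K} :=
  match n with
  | 0 => (0, 1)
  | n'.+1 => let (a, b) := Ppair K n' in (b, 2%:R *: 'X * b - a)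
  end.
Definition Pnat (K : fieldType) (n : nat) : {poly K} := (Ppair K n).1.
Definition Pcheb (K : fieldType) (n : int) : {poly K} :=
  match n with
  | Posz k => Pnat K k
  | Negz k => - Pnat K k.+1
  end.

Lemma Pnat_rec (K : fieldType) (n : nat) :
  Pnat K n.+2 = 2%:R *: 'X * Pnat K n.+1 - Pnat K n.
Proof. rewrite /Pnat /=; by case: (Ppair K n). Qed.
Lemma Pcheb0 (K : fieldType) : Pcheb K 0 = 0. Proof. by []. Qed.
Lemma Pcheb1 (K : fieldType) : Pcheb K 1 = 1. Proof. by []. Qed.
Lemma Pcheb_rec (K : fieldType) (n : int) :
  2%:R *: 'X * Pcheb K n = Pcheb K (n - 1) + Pcheb K (n + 1).
Proof.
case: n => [[|k]|k].
- by rewrite /= /Pnat /= mulr0 addrC subrr.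
- have -> : (k.+1%:Z - 1) = Posz k by rewrite -addn1 PoszD addrK.
  have -> : (k.+1%:Z + 1) = Posz k.+2 by rewrite -[k.+2]addn1 PoszD.
  by rewrite /= Pnat_rec addrC subrK.
- have -> : Negz k - 1 = Negz k.+1 by rewrite !NegzE -opprD -[1]/(Posz 1) -PoszD addn1.
  case: k => [|k].
  + have -> : Negz 0 + 1 = 0 by [].
    by rewrite /= /Pnat /= mulrN mulr1 subr0 addr0.
  + have -> : Negz k.+1 + 1 = Negz k by rewrite !NegzE -addn1 PoszD opprD addrNK.
    by rewrite /Pcheb [Pnat K k.+3]Pnat_rec opprB addrAC subrr add0r mulrN.
Qed.

(* Main.v *)
Require Import Defs.
From HB Require Import structures.
From mathcomp Require Import all_boot all_order all_algebra.
From mathcomp Require Import ring zify.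
Set Implicit Arguments. Unset Strict Implicit. Unset Printing Implicit Defensive.
Import GRing.Theory.
Local Open Scope ring_scope.

Section Tool.
Variables (K : fieldType) (G : groupType).
Local Notation kG := (kG K G).
Implicit Types x y z u v a b w s c : kG.

Lemma kcoefE x g : kcoef x g = \sum_(p <- x) (if p.2 == g then p.1 else 0).
Proof. by rewrite /kcoef big_mkcond. Qed.

Lemma kcoef_nil g : kcoef ([::] : kG) (g : G) = 0.
Proof. by rewrite kcoefE big_nil. Qed.

Lemma kcoef_add x y g : kcoef (kadd x y) g = kcoef x g + kcoef y g.
Proof. by rewrite !kcoefE big_cat. Qed.

Lemma kcoef_scale (c : K) x g : kcoef (kscale c x) g = c * kcoef x g.
Proof. by rewrite !kcoefE big_map big_distrr; apply: eq_bigr => p _ /=; case: ifP => _; rewrite ?mulr0. Qed.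

Lemma kcoef_opp x g : kcoef (kopp x) g = - kcoef x g.
Proof. by rewrite !kcoefE big_map -sumrN; apply: eq_bigr => p _ /=; case: ifP => _; rewrite ?oppr0. Qed.

Lemma kcoef_sub x y g : kcoef (ksub x y) g = kcoef x g - kcoef y g.
Proof. by rewrite kcoef_add kcoef_opp. Qed.

Lemma kcoef_star x g : kcoef (kstar x) g = kcoef x g^-1.
Proof. by rewrite !kcoefE big_map; apply: eq_bigr => p _ /=; rewrite eqg_invLR. Qed.

Lemma kcoef_grp (a g : G) : kcoef (kgrp K a) g = if a == g then 1 else 0.
Proof. by rewrite kcoefE big_cons big_nil addr0. Qed.

Lemma kcoef_one (g : G) : kcoef (kone K G) g = if 1%g == g then 1 else 0.
Proof. by rewrite kcoefE big_cons big_nil addr0. Qed.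

Lemma kcoef_mul x y g : kcoef (kmul x y) g =
  \sum_(p <- x) \sum_(q <- y) (if (p.2 * q.2)%g == g then p.1 * q.1 else 0).
Proof. by rewrite kcoefE /kmul big_allpairs_dep. Qed.

Lemma kcoef_mull x y g : kcoef (kmul x y) g = \sum_(p <- x) p.1 * kcoef y (p.2^-1 * g)%g.
Proof.
rewrite kcoef_mul; apply: eq_bigr => p _; rewrite kcoefE big_distrr; apply: eq_bigr => q _ /=.
have -> : ((p.2 * q.2)%g == g) = (q.2 == p.2^-1 * g)%g.
  by apply/eqP/eqP => [<-|->]; rewrite ?mulKg ?mulVKg.
by case: ifP; rewrite ?mulr0.
Qed.

Lemma kcoef_mulr x y g : kcoef (kmul x y) g = \sum_(q <- y) kcoef x (g * q.2^-1)%g * q.1.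
Proof.
rewrite kcoef_mul exchange_big; apply: eq_bigr => q _; rewrite kcoefE big_distrl; apply: eq_bigr => p _ /=.
have -> : ((p.2 * q.2)%g == g) = (p.2 == g * q.2^-1)%g.
  by apply/eqP/eqP => [<-|->]; rewrite ?mulgK ?mulgVK.
by case: ifP; rewrite ?mul0r.
Qed.

Lemma keqv_refl x : keqv x x. Proof. by []. Qed.
Lemma keqv_sym x y : keqv x y -> keqv y x. Proof. by move=> H g; rewrite H. Qed.
Lemma keqv_trans x y z : keqv x y -> keqv y z -> keqv x z.
Proof. by move=> H1 H2 g; rewrite H1 H2. Qed.
Lemma keqv_add x x' y y' : keqv x x' -> keqv y y' -> keqv (kadd x y) (kadd x' y').
Proof. by move=> H1 H2 g; rewrite !kcoef_add H1 H2. Qed.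
Lemma keqv_opp x x' : keqv x x' -> keqv (kopp x) (kopp x').
Proof. by move=> H1 g; rewrite !kcoef_opp H1. Qed.
Lemma keqv_sub x x' y y' : keqv x x' -> keqv y y' -> keqv (ksub x y) (ksub x' y').
Proof. by move=> H1 H2 g; rewrite !kcoef_sub H1 H2. Qed.
Lemma keqv_scale (c : K) x x' : keqv x x' -> keqv (kscale c x) (kscale c x').
Proof. by move=> H1 g; rewrite !kcoef_scale H1. Qed.
Lemma keqv_star x x' : keqv x x' -> keqv (kstar x) (kstar x').
Proof. by move=> H1 g; rewrite !kcoef_star H1. Qed.
Lemma keqv_bar x x' : keqv x x' -> keqv (kbar x) (kbar x').
Proof. by move=> H; apply/keqv_scale/keqv_add/keqv_star. Qed.
Lemma keqv_mul x x' y y' : keqv x x' -> keqv y y' -> keqv (kmul x y) (kmul x' y').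
Proof.
move=> H1 H2 g; rewrite kcoef_mull (eq_bigr _ (fun p _ => congr1 _ (H2 _))).
rewrite -kcoef_mull kcoef_mulr.
by rewrite (eq_bigr _ (fun p _ => congr1 (fun t => t * _) (H1 _))) -kcoef_mulr.
Qed.

Lemma kmulA x y z : keqv (kmul (kmul x y) z) (kmul x (kmul y z)).
Proof.
move=> g; rewrite !kcoef_mul /kmul big_allpairs_dep; apply: eq_bigr => p _.
rewrite big_allpairs_dep; apply: eq_bigr => q _; apply: eq_bigr => s _ /=.
by rewrite mulgA mulrA.
Qed.

Lemma kmulDl x y z : keqv (kmul (kadd x y) z) (kadd (kmul x z) (kmul y z)).
Proof. by move=> g; rewrite kcoef_add !kcoef_mull big_cat. Qed.
Lemma kmulDr x y z : keqv (kmul x (kadd y z)) (kadd (kmul x y) (kmul x z)).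
Proof. by move=> g; rewrite kcoef_add !kcoef_mulr big_cat. Qed.
Lemma kmulZl (c : K) x y : keqv (kmul (kscale c x) y) (kscale c (kmul x y)).
Proof.
move=> g; rewrite kcoef_scale !kcoef_mull big_map big_distrr.
by apply: eq_bigr => p _ /=; rewrite mulrA.
Qed.
Lemma kmulZr (c : K) x y : keqv (kmul x (kscale c y)) (kscale c (kmul x y)).
Proof.
move=> g; rewrite kcoef_scale !kcoef_mulr big_map big_distrr.
by apply: eq_bigr => p _ /=; rewrite mulrCA.
Qed.
Lemma kmulNl x y : keqv (kmul (kopp x) y) (kopp (kmul x y)).
Proof.
move=> g; rewrite kcoef_opp !kcoef_mull big_map -sumrN.
by apply: eq_bigr => p _ /=; rewrite mulNr.
Qed.
Lemma kmulNr x y : keqv (kmul x (kopp y)) (kopp (kmul x y)).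
Proof.
move=> g; rewrite kcoef_opp !kcoef_mulr big_map -sumrN.
by apply: eq_bigr => p _ /=; rewrite mulrN.
Qed.
Lemma kmulBl x y z : keqv (kmul (ksub x y) z) (ksub (kmul x z) (kmul y z)).
Proof.
apply: keqv_trans (kmulDl _ _ _) _; apply: keqv_add => //; exact: kmulNl.
Qed.
Lemma kmulBr x y z : keqv (kmul x (ksub y z)) (ksub (kmul x y) (kmul x z)).
Proof.
apply: keqv_trans (kmulDr _ _ _) _; apply: keqv_add => //; exact: kmulNr.
Qed.
Lemma kmul1l x : keqv (kmul (kone K G) x) x.
Proof.
by move=> g; rewrite kcoef_mull big_cons big_nil /= invg1 mul1g mul1r addr0.
Qed.
Lemma kmul1r x : keqv (kmul x (kone K G)) x.
Proof.
by move=> g; rewrite kcoef_mulr big_cons big_nil /= invg1 mulg1 mulr1 addr0.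
Qed.
Lemma kmul0r x : keqv (kmul x [::]) [::].
Proof. by move=> g; rewrite kcoef_mulr big_nil kcoef_nil. Qed.
Lemma kstarM x y : keqv (kstar (kmul x y)) (kmul (kstar y) (kstar x)).
Proof.
move=> g; rewrite kcoef_star !kcoef_mul /kstar big_map exchange_big; apply: eq_bigr => q _; rewrite big_map.
apply: eq_bigr => p _ /=.
rewrite mulrC; congr (if _ then _ else _).
by rewrite -eqg_inv invgK invgM.
Qed.
Lemma kstarK x : keqv (kstar (kstar x)) x.
Proof. by move=> g; rewrite !kcoef_star invgK. Qed.
Lemma kstar_add x y : kstar (kadd x y) = kadd (kstar x) (kstar y).
Proof. exact: map_cat. Qed.
Lemma kstar_sub x y : keqv (kstar (ksub x y)) (ksub (kstar x) (kstar y)).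
Proof. by move=> g; rewrite !(kcoef_star, kcoef_sub). Qed.
Lemma kstar_scale (c : K) x : keqv (kstar (kscale c x)) (kscale c (kstar x)).
Proof. by move=> g; rewrite !(kcoef_star, kcoef_scale). Qed.
Lemma kcoef_bar x g : kcoef (kbar x) g = 2^-1 * (kcoef x g + kcoef x g^-1).
Proof. by rewrite kcoef_scale kcoef_add kcoef_star. Qed.
Lemma kbar_sym x : ksym (kbar x).
Proof. by move=> g; rewrite kcoef_star !kcoef_bar invgK addrC. Qed.
Lemma kbar_sub x y : keqv (kbar (ksub x y)) (ksub (kbar x) (kbar y)).
Proof.
move=> g; rewrite !(kcoef_sub, kcoef_bar, kcoef_star); by rewrite -mulrBr; congr (_ * _); rewrite opprD !addrA; congr (_ + _); rewrite addrAC.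
Qed.

Lemma inI_keqv0 x : keqv x [::] -> inI x.
Proof. move=> H. have H2 := keqv_sym H. exact: (inI_eqv H2 (inI_nil K G)). Qed.

Lemma inI_mulr x w : inI x -> inI (kmul x w).
Proof.
elim=> [u v a b Hb|||].
- apply: inI_eqv (keqv_sym (kmulA _ _ _)) _; exact: inI_gen.
- by apply: inI_keqv0 => g; rewrite kcoef_mull !big_nil ?kcoef_nil.
- move=> x1 y1 _ H1 _ H2; apply: inI_eqv (keqv_sym (kmulDl _ _ _)) _; exact: inI_add.
- move=> x1 y1 E _ H; apply: inI_eqv H; exact: keqv_mul.
Qed.

Lemma inI_mull x w : inI x -> inI (kmul w x).
Proof.
elim=> [u v a b Hb|||].
- apply: inI_eqv (inI_gen (kmul w u) v a Hb).
  apply: keqv_trans (kmulA _ _ _) _; apply: keqv_trans (kmulA _ _ _) _; apply: keqv_mul => //; exact: keqv_sym (kmulA _ _ _).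
- exact: inI_keqv0 (kmul0r _).
- move=> x1 y1 _ H1 _ H2; apply: inI_eqv (keqv_sym (kmulDr _ _ _)) _; exact: inI_add.
- move=> x1 y1 E _ H; apply: inI_eqv H; exact: keqv_mul.
Qed.

Lemma inI_scale (c : K) x : inI x -> inI (kscale c x).
Proof.
move=> H; apply: inI_eqv (inI_mull (kscale c (kone K G)) H).
apply: keqv_trans (kmulZl _ _ _) _; apply: keqv_scale; exact: kmul1l.
Qed.

Lemma inI_opp x : inI x -> inI (kopp x).
Proof.
move=> H; apply: inI_eqv (inI_scale (-1) H) => g.
by rewrite kcoef_scale kcoef_opp mulN1r.
Qed.

Lemma eqA_keqv x y : keqv x y -> eqA x y.
Proof. by move=> H; apply: inI_keqv0 => g; rewrite kcoef_sub H subrr kcoef_nil. Qed.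
Lemma eqA_refl x : eqA x x. Proof. exact: eqA_keqv. Qed.
Lemma eqA_sym x y : eqA x y -> eqA y x.
Proof.
move=> H; apply: inI_eqv (inI_opp H) => g.
by rewrite kcoef_opp !kcoef_sub opprB.
Qed.
Lemma eqA_trans x y z : eqA x y -> eqA y z -> eqA x z.
Proof.
move=> H1 H2; apply: inI_eqv (inI_add H1 H2) => g.
by rewrite kcoef_add !kcoef_sub addrA subrK.
Qed.
Lemma eqA_add x x' y y' : eqA x x' -> eqA y y' -> eqA (kadd x y) (kadd x' y').
Proof.
move=> H1 H2; apply: inI_eqv (inI_add H1 H2) => g.
rewrite !(kcoef_add, kcoef_sub). by rewrite opprD addrACA.
Qed.
Lemma eqA_sub x x' y y' : eqA x x' -> eqA y y' -> eqA (ksub x y) (ksub x' y').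
Proof.
move=> H1 H2; apply: inI_eqv (inI_add H1 (inI_opp H2)) => g.
rewrite !(kcoef_add, kcoef_sub, kcoef_opp); ring.
Qed.
Lemma eqA_scale (c : K) x x' : eqA x x' -> eqA (kscale c x) (kscale c x').
Proof.
move=> H; apply: inI_eqv (inI_scale c H) => g.
by rewrite !(kcoef_scale, kcoef_sub) mulrBr.
Qed.
Lemma eqA_mul x x' y y' : eqA x x' -> eqA y y' -> eqA (kmul x y) (kmul x' y').
Proof.
move=> H1 H2; apply: (@eqA_trans _ (kmul x' y)).
  apply: inI_eqv (inI_mulr y H1); exact: kmulBl.
apply: inI_eqv (inI_mull x' H2); exact: kmulBr.
Qed.
Lemma eqA_star_keqv x y : keqv x y -> eqA (kstar x) (kstar y).
Proof. by move=> H; apply/eqA_keqv/keqv_star. Qed.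

Lemma sym_central a b : ksym b -> eqA (kmul a b) (kmul b a).
Proof.
move=> Hb; apply: inI_eqv (inI_gen (kone K G) (kone K G) a Hb).
apply: keqv_trans (kmul1r _) _; exact: kmul1l.
Qed.

Lemma ksym_sharp x : ksym x -> sharp x.
Proof. exact: eqA_keqv. Qed.

Section Sharp.
Hypothesis two_nz : (2%:R : K) != 0.

Lemma sharp_bar x : sharp x -> eqA x (kbar x).
Proof.
move=> Hx; apply: inI_eqv (inI_scale (- 2^-1) Hx) => g.
rewrite !(kcoef_scale, kcoef_sub, kcoef_star, kcoef_bar); field; exact: two_nz.
Qed.

Lemma sharp_central a s : sharp s -> eqA (kmul a s) (kmul s a).
Proof.
move=> Hs; apply: (@eqA_trans _ (kmul a (kbar s))).
  by apply: eqA_mul; [exact: eqA_refl | exact: sharp_bar].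
apply: eqA_trans (sym_central a (kbar_sym s)) _.
by apply: eqA_mul; [exact: eqA_sym (sharp_bar Hs) | exact: eqA_refl].
Qed.

Lemma sharp_mul a c : sharp a -> sharp c -> sharp (kmul a c).
Proof.
move=> Ha Hc; rewrite /sharp.
apply: eqA_trans (eqA_keqv (kstarM a c)) _.
apply: eqA_trans (eqA_mul Hc Ha) _.
exact: sharp_central.
Qed.
End Sharp.
End Tool.

Section Poly.
Variables (K : fieldType) (G : groupType).
Local Notation kG := (kG K G).
Implicit Types x y a : kG.

Definition kpow x i : kG := iter i (fun y => kmul y x) (kone K G).

Lemma kcoef_mul_lin y x (N : nat) (c : nat -> K) (B : nat -> kG) g :
  (forall g', kcoef y g' = \sum_(i < N) c i * kcoef (B i) g') ->
  kcoef (kmul y x) g = \sum_(i < N) c i * kcoef (kmul (B i) x) g.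
Proof.
move=> H; rewrite kcoef_mulr.
under eq_bigr do rewrite H big_distrl.
rewrite exchange_big; apply: eq_bigr => i _ /=.
rewrite kcoef_mulr big_distrr; apply: eq_bigr => q _; by rewrite -mulrA.
Qed.

Lemma hor_coef (s : seq K) x g :
  kcoef (foldr (fun c acc => kadd (kmul acc x) (kscale c (kone K G))) [::] s) g =
  \sum_(i < size s) s`_i * kcoef (kpow x i) g.
Proof.
set F := (fun c acc => kadd (kmul acc x) (kscale c (kone K G))).
elim: s g => [|c s IH] g.
  by rewrite big_ord0 kcoefE big_nil.
have -> : foldr F [::] (c :: s) = kadd (kmul (foldr F [::] s) x) (kscale c (kone K G)) by [].
rewrite kcoef_add kcoef_scale big_ord_recl addrC; congr (_ + _).
  exact: (@kcoef_mul_lin _ x (size s) (fun i => s`_i) (kpow x) g IH).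
Qed.

Lemma kpevalE (p : {poly K}) x g N : (size p <= N)%N ->
  kcoef (kpeval p x) g = \sum_(i < N) p`_i * kcoef (kpow x i) g.
Proof.
move=> HN; rewrite /kpeval hor_coef (big_ord_widen N (fun i => p`_i * kcoef (kpow x i) g) HN).
rewrite big_mkcond; apply: eq_bigr => i _ /=.
by case: ltnP => // Hi; rewrite nth_default ?mul0r.
Qed.
End Poly.

Section Cheb.
Variables (K : fieldType) (G : groupType) (h : G).
Hypothesis two_nz : (2%:R : K) != 0.
Local Notation kG := (kG K G).
Local Notation X := (kbar (kgrp K h)).
Local Notation D := (ksub (kgrp K h) (kgrp K h^-1)).
Local Notation F p g := (kcoef (kpeval p X) g).

Lemma kcoef_mulX (y : kG) g :
  kcoef (kmul y X) g = 2^-1 * (kcoef y (g * h^-1)%g + kcoef y (g * h)%g).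
Proof.
rewrite kcoef_mulr /kbar /kscale /kadd /kstar /kgrp /= !big_cons big_nil /= invgK.
ring.
Qed.

Lemma kcoef_mulD (y : kG) g :
  kcoef (kmul y D) g = kcoef y (g * h^-1)%g - kcoef y (g * h)%g.
Proof.
rewrite kcoef_mulr /ksub /kopp /kadd /kgrp /= !big_cons big_nil /= invgK.
ring.
Qed.

Lemma Frec (p q : {poly K}) g :
  F (2%:R *: 'X * p - q) g = F p (g * h^-1)%g + F p (g * h)%g - F q g.
Proof.
set r := 2%:R *: 'X * p - q.
set M := (size r + size p + size q)%N.
have r0 : r`_0 = - q`_0 by rewrite /r coefB -scalerAl coefZ coefXM /= mulr0 sub0r.
have rS i : r`_i.+1 = 2%:R * p`_i - q`_i.+1 by rewrite /r coefB -scalerAl coefZ coefXM.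
have Hr : (size r <= M.+1)%N by rewrite /M; lia.
have Hp : (size p <= M)%N by rewrite /M; lia.
have Hq : (size q <= M.+1)%N by rewrite /M; lia.
have -> : F p (g * h^-1)%g + F p (g * h)%g = 2%:R * kcoef (kmul (kpeval p X) X) g.
  by rewrite kcoef_mulX mulrA mulfV // mul1r.
rewrite (@kcoef_mul_lin K G (kpeval p X) X M (fun i => p`_i) (kpow X) g (fun g' => kpevalE X g' Hp)).
rewrite (kpevalE _ _ Hr) (kpevalE _ _ Hq) !big_ord_recl r0.
under eq_bigr => i _ do rewrite rS.
under eq_bigr => i _ do rewrite mulrBl.
rewrite sumrB.
have -> : \sum_(i < M) 2%:R * p`_i * kcoef (kpow X (lift ord0 i)) g =
          2%:R * \sum_(i < M) p`_i * kcoef (kmul (kpow X i) X) g.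
  by rewrite [RHS]big_distrr; apply: eq_bigr => i _; rewrite -mulrA.
have -> : \sum_(i < M) q`_(lift ord0 i) * kcoef (kpow X (lift ord0 i)) g =
          \sum_(i < M) q`_i.+1 * kcoef (kpow X i.+1) g by [].
ring.
Qed.

Local Notation Fn k g := (kcoef (kpeval (Pnat K k) X) g).
Local Notation d a g := (if (a == g)%g then (1 : K) else 0).

Lemma FnS k g : Fn k.+2 g = Fn k.+1 (g * h^-1)%g + Fn k.+1 (g * h)%g - Fn k g.
Proof. by rewrite Pnat_rec Frec. Qed.

Lemma Fn0 g : Fn 0 g = 0.
Proof. by rewrite (@kpevalE K G _ _ _ 0) ?big_ord0 // size_poly0. Qed.

Lemma Fn1 g : Fn 1 g = d 1%g g.
Proof.
have -> : Pnat K 1 = 1 by [].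
rewrite (@kpevalE K G _ _ _ 1) ?size_poly1 // big_ord1 coef1 /= mul1r.
by rewrite /kone kcoefE big_cons big_nil addr0.
Qed.

Lemma nat_ind2 (P : nat -> Prop) :
  P 0%N -> P 1%N -> (forall k, P k -> P k.+1 -> P k.+2) -> forall k, P k.
Proof.
move=> H0 H1 HS k; suff: P k /\ P k.+1 by case.
by elim: k => [|k [Ha Hb]]; split => //; exact: HS.
Qed.

Lemma FnT k a : Fn k (h * a)%g = Fn k (a * h)%g.
Proof.
elim/nat_ind2: k a => [a|a|k IH0 IH1 a]; first by rewrite !Fn0.
- rewrite !Fn1; congr (if _ then _ else _).
  apply/eqP/eqP => E.
    by rewrite -(mulg1_eq (esym E)) mulVg.
  by rewrite -(mulg1_eq (esym E)) mulVg.
- rewrite !FnS -mulgA IH1 mulgVK -mulgA IH1 IH0 mulgK.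
  by rewrite -!mulgA.
Qed.

Lemma FnTV k a : Fn k (h^-1 * a)%g = Fn k (a * h^-1)%g.
Proof.
have := FnT k (h^-1 * a * h^-1)%g.
by rewrite !mulgA mulgV mul1g mulgVK => ->.
Qed.

Lemma FnSym k g : Fn k g^-1 = Fn k g.
Proof.
elim/nat_ind2: k g => [g|g|k IH0 IH1 g]; first by rewrite !Fn0.
- rewrite !Fn1; congr (if _ then _ else _).
  by rewrite eq_sym eqg_invLR invg1 eq_sym.
- rewrite !FnS IH0 -invgM IH1 FnT.
  have -> : (g^-1 * h = (h^-1 * g)^-1)%g by rewrite invgM invgK.
  by rewrite IH1 FnTV; congr (_ - _); rewrite addrC.
Qed.

Lemma eqMV (a b g : G) : (a == g * b^-1)%g = (a * b == g)%g.
Proof. by apply/eqP/eqP => [->|<-]; rewrite ?mulgVK ?mulgK. Qed.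
Lemma eqM (a b g : G) : (a == g * b)%g = (a * b^-1 == g)%g.
Proof. by apply/eqP/eqP => [->|<-]; rewrite ?mulgK ?mulgVK. Qed.

Lemma lin4 (a b c e : K) : a - b + (c - e) - (c - b) = a - e.
Proof. ring. Qed.

Lemma FnC k g : Fn k (g * h^-1)%g - Fn k (g * h)%g = d (h ^+ k)%g g - d (h ^+ k)^-1%g g.
Proof.
elim/nat_ind2: k g => [g|g|k IH0 IH1 g].
- by rewrite !Fn0 expg0 invg1 !subrr.
- rewrite !Fn1 expg1 eqMV eqM mul1g div1g.
  by rewrite ![(_ == g)%g]eq_sym.
- have A := IH1 (g * h^-1)%g; have B := IH1 (g * h)%g; have C := IH0 g.
  rewrite mulgVK eqMV eqMV in A; rewrite mulgK eqM eqM in B.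
  have e1 : (h ^+ k.+1 * h = h ^+ k.+2)%g by rewrite -expgSr.
  have e2 : ((h ^+ k.+1)^-1 * h = (h ^+ k)^-1)%g by rewrite expgS invgM mulgVK.
  have e3 : (h ^+ k.+1 * h^-1 = h ^+ k)%g by rewrite expgSr mulgK.
  have e4 : ((h ^+ k.+1)^-1 * h^-1 = (h ^+ k.+2)^-1)%g by rewrite -invgM -expgS.
  rewrite e1 e2 in A; rewrite e3 e4 in B.
  rewrite !FnS mulgVK mulgK.
  transitivity ((Fn k.+1 (g * h^-1 * h^-1)%g - Fn k.+1 g) + (Fn k.+1 g - Fn k.+1 (g * h * h)%g)
     - (Fn k (g * h^-1)%g - Fn k (g * h)%g)); first ring.
  by rewrite A B C; apply: lin4.
Qed.

Local Notation P n := (kpeval (Pcheb K n) X).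

Lemma Fopp (p : {poly K}) g : F (- p) g = - F p g.
Proof.
rewrite (@kpevalE K G _ _ _ (size p)) ?size_polyN // (@kpevalE K G _ _ _ (size p)) //.
by rewrite -sumrN; apply: eq_bigr => i _; rewrite coefN mulNr.
Qed.

Lemma Psym n : ksym (P n).
Proof.
move=> g; rewrite kcoef_star; case: n => k; rewrite /Pcheb.
  exact: FnSym.
by rewrite !Fopp FnSym.
Qed.

Lemma Cheb n : keqv (ksub (kgrp K (gexpz h n)) (kgrp K (gexpz h n)^-1)) (kmul (P n) D).
Proof.
move=> g; rewrite kcoef_sub !kcoef_grp kcoef_mulD; case: n => k; rewrite /Pcheb /gexpz.
  by rewrite FnC.
by rewrite !Fopp invgK -[LHS]opprK opprB -FnC; ring.
Qed.
End Cheb.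

Theorem mainTheorem11 (K : fieldType) (charK0 : [pchar K] =i pred0)
    (G : groupType) (h : G) (n : int) :
  forall y : kG K G,
    sharpsharp (fun l => l = gexpz h n) y ->
    sharp_ideal (fun s => s = kpeval (Pcheb K n) (kbar (kgrp K h))) y.
Proof.
have two_nz : (2%:R : K) != 0 by rewrite (pcharf0P _).1.
set X := kbar (kgrp K h).
set D := ksub (kgrp K h) (kgrp K h^-1).
set Pn := kpeval (Pcheb K n) X.
have PnS : ksym Pn := @Psym K G h two_nz n.
move=> y; rewrite /sharpsharp.
elim=> [a s b Ha Hs Hb||x1 y1 _ IH1 _ IH2|x1 y1 E _ IH].
- case: Hs => x [l [-> ->]].
  set u := kmul x (kmul Pn D).
  set v := kmul (kstar D) (kmul Pn (kstar x)).
  set c := kbar (kmul x D).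
  have key : eqA (kmul c Pn) (ksub (kbar (kmul x (kgrp K (gexpz h n)))) (kbar (kmul x (kgrp K (gexpz h n)^-1)))).
    have E1 : keqv (kbar u) (ksub (kbar (kmul x (kgrp K (gexpz h n)))) (kbar (kmul x (kgrp K (gexpz h n)^-1)))).
      apply: keqv_trans _ (kbar_sub _ _); apply: keqv_bar.
      apply: keqv_trans _ (kmulBr _ _ _); apply: keqv_mul => //.
      exact: keqv_sym (@Cheb K G h two_nz n).
    apply: eqA_trans _ (eqA_keqv E1).
    have E2 : keqv (kscale 2^-1 (kadd u v)) (kbar u).
      apply: keqv_scale; apply: keqv_add => //.
      apply: keqv_sym; apply: keqv_trans (kstarM _ _) _.
      apply: keqv_trans (kmulA _ _ _).
      apply: keqv_mul => //; apply: keqv_trans (kstarM _ _) _.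
      by apply: keqv_mul.
    apply: eqA_trans _ (eqA_keqv E2).
    have E4 : keqv (kmul c Pn) (kscale 2^-1 (kadd (kmul (kmul x D) Pn) (kmul (kmul (kstar D) (kstar x)) Pn))).
      apply: keqv_trans (kmulZl _ _ _) _; apply: keqv_scale.
      apply: keqv_trans (kmulDl _ _ _) _; apply: keqv_add => //.
      by apply: keqv_mul => //; exact: kstarM.
    apply: eqA_trans (eqA_keqv E4) _; apply: eqA_scale; apply: eqA_add.
    + apply: eqA_trans (eqA_keqv (kmulA _ _ _)) _.
      apply: eqA_mul; first exact: eqA_refl.
      exact: sym_central.
    + apply: eqA_trans (eqA_keqv (kmulA _ _ _)) _.
      apply: eqA_mul; first exact: eqA_refl.
      exact: sym_central.
  apply: si_eqA (si_gen (s := Pn) (sharp_mul two_nz Ha (ksym_sharp (kbar_sym (kmul x D)))) erefl Hb).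
  apply: eqA_mul; last exact: eqA_refl.
  apply: eqA_trans (eqA_keqv (kmulA _ _ _)) _.
  by apply: eqA_mul; [exact: eqA_refl | exact: key].
- exact: si_nil.
- exact: si_add.
- exact: si_eqA E IH.
Qed.
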